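(* For every integer $n>2$, the finite model $\mathbb{S}^1_n$ of $S^1$ with $2n$ points satisfies $\mathrm{TC}(\mathbb{S}^1_n)\le 3$.
   Context: Finite spaces are finite $T_0$ topological spaces, identified with finite posets: $y\le x$ iff $y$ lies in every open set containing $x$; the minimal open neighborhood of $x$ is $x^\downarrow=\{y: y\le x\}$, and open sets are exactly the down-closed sets. For $n\ge 2$, $\mathbb{S}^1_n=\{x_0,\dots,x_{n-1},y_0,\dots,y_{n-1}\}$ is the finite space whose minimal open sets are $x_i^\downarrow=\{x_i\}$ and $y_i^\downarrow=\{y_i,x_i,x_{i-1 \bmod n}\}$ for $0\le i<n$. Topological complexity is unreduced: for a path-connected space $X$, with $X^I$ the space of paths $[0,1]\to X$ (compact-open topology) and $\pi:X^I\to X\times X$, $\pi(\gamma)=(\gamma(0),\gamma(1))$, $\mathrm{TC}(X)$ is the minimal $k$ such that $X\times X$ is covered by open sets $Q_1,\dots,Q_k$ each admitting a continuous map $s_i:Q_i\to X^I$ with $\pi\circ s_i$ the inclusion. *)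

(* Defs.v *)
From Stdlib Require Import Reals List Arith.
Open Scope R_scope.

Definition unitI : Type := {t : R | 0 <= t <= 1}.
Definition I0 : unitI := exist _ 0 (conj (Rle_refl 0) Rle_0_1).
Definition I1 : unitI := exist _ 1 (conj Rle_0_1 (Rle_refl 1)).

Definition openI (V : unitI -> Prop) : Prop :=
  forall t, V t -> exists eps, 0 < eps /\
    forall s : unitI, Rabs (proj1_sig s - proj1_sig t) < eps -> V s.

Definition compactI (K : unitI -> Prop) : Prop :=
  forall (J : Type) (F : J -> unitI -> Prop),
    (forall j, openI (F j)) ->
    (forall t, K t -> exists j, F j t) ->
    exists l : list J, forall t, K t -> exists j, In j l /\ F j t.

(** A space is a carrier T with a predicate [openT] singling out its open sets. *)

Definition cont_path {T : Type} (openT : (T -> Prop) -> Prop) (g : unitI -> T) : Prop :=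
  forall U, openT U -> openI (fun t => U (g t)).

Definition Path (T : Type) (openT : (T -> Prop) -> Prop) : Type :=
  {g : unitI -> T | cont_path openT g}.

Definition co_subbasic {T : Type} (openT : (T -> Prop) -> Prop)
  (K : unitI -> Prop) (U : T -> Prop) (g : Path T openT) : Prop :=
  forall t, K t -> U (proj1_sig g t).

(** Compact-open topology: the topology generated by the subbasis above,
    i.e. unions of finite intersections of subbasic sets. *)
Definition open_CO {T : Type} (openT : (T -> Prop) -> Prop) (W : Path T openT -> Prop) : Prop :=
  forall g, W g -> exists l : list ((unitI -> Prop) * (T -> Prop)),
    (forall KU, In KU l -> compactI (fst KU) /\ openT (snd KU)) /\
    (forall KU, In KU l -> co_subbasic openT (fst KU) (snd KU) g) /\
    (forall h, (forall KU, In KU l -> co_subbasic openT (fst KU) (snd KU) h) -> W h).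

Definition open_prod {T : Type} (openT : (T -> Prop) -> Prop) (W : T * T -> Prop) : Prop :=
  forall p, W p -> exists U V, openT U /\ openT V /\ U (fst p) /\ V (snd p) /\
    forall a b, U a -> V b -> W (a, b).

(** Continuity of s : Q -> X^I, Q carrying the subspace topology of X × X. *)
Definition cont_on {T : Type} (openT : (T -> Prop) -> Prop) (Q : T * T -> Prop)
  (s : {p : T * T | Q p} -> Path T openT) : Prop :=
  forall O, open_CO openT O ->
    exists W, open_prod openT W /\ forall q, O (s q) <-> W (proj1_sig q).

Definition is_section {T : Type} (openT : (T -> Prop) -> Prop) (Q : T * T -> Prop)
  (s : {p : T * T | Q p} -> Path T openT) : Prop :=
  forall q, proj1_sig (s q) I0 = fst (proj1_sig q) /\ proj1_sig (s q) I1 = snd (proj1_sig q).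

Definition mp_cover (T : Type) (openT : (T -> Prop) -> Prop) (k : nat) : Prop :=
  exists (Q : nat -> T * T -> Prop) (s : forall i, {p : T * T | Q i p} -> Path T openT),
    (forall i, (i < k)%nat ->
       open_prod openT (Q i) /\ cont_on openT (Q i) (s i) /\ is_section openT (Q i) (s i)) /\
    (forall p, exists i, (i < k)%nat /\ Q i p).

(** m = TC(X) (unreduced): m is the minimal such k. *)
Definition is_TC (T : Type) (openT : (T -> Prop) -> Prop) (m : nat) : Prop :=
  mp_cover T openT m /\ forall m', mp_cover T openT m' -> (m <= m')%nat.

(** The finite space S^1_n: points (false,i) = x_i and (true,i) = y_i, i < n. *)
Definition S1pt (n : nat) : Type := {p : bool * nat | (snd p < n)%nat}.

(** a ≤ b iff a lies in the minimal open set b^↓: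
    x_i^↓ = {x_i},  y_i^↓ = {y_i, x_i, x_{i-1 mod n}}. *)
Definition S1le (n : nat) (a b : S1pt n) : Prop :=
  let (ba, ia) := proj1_sig a in
  let (bb, ib) := proj1_sig b in
  if bb then (ba = true /\ ia = ib) \/
             (ba = false /\ (ia = ib \/ ia = ((ib + n - 1) mod n)%nat))
  else ba = false /\ ia = ib.

Definition S1open (n : nat) (U : S1pt n -> Prop) : Prop :=
  forall a b, S1le n a b -> U b -> U a.

(* Main.v *)
Require Import Defs.
From Stdlib Require Import Reals List Arith Lia ZArith ProofIrrelevance Lra ClassicalEpsilon Classical.

Definition idxZ (K : nat) (t : R) : Z :=
  let x := (t * INR K)%R in
  if Req_dec_T (IZR (up x)) (x + 1)%R then (2 * (up x - 1))%Z else (2 * up x - 1)%Z.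

Lemma zig_local {T : Type} (le : T -> T -> Prop) (w : Z -> T) (K : nat)
  (HK : (0 < K)%nat) (Hrefl : forall a, le a a)
  (Hz : forall z, le (w (2*z+1)%Z) (w (2*z)%Z) /\ le (w (2*z-1)%Z) (w (2*z)%Z)) :
  forall t : R, exists eps, 0 < eps /\ forall s : R, Rabs (s - t) < eps ->
    le (w (idxZ K s)) (w (idxZ K t)).
Proof.
  intros t.
  assert (HKp : 0 < INR K) by (apply lt_0_INR; auto).
  unfold idxZ.
  set (x := (t * INR K)%R).
  destruct (archimed x) as [A1 A2].
  assert (Hd : forall s d, 0 < d -> Rabs (s - t) < d / INR K -> Rabs (s * INR K - x) < d).
  { intros s d Hd0 Hs. unfold x. replace (s * INR K - t * INR K) with ((s - t) * INR K) by ring.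
    rewrite Rabs_mult, (Rabs_right (INR K)) by lra.
    apply Rmult_lt_compat_r with (r := INR K) in Hs; auto.
    unfold Rdiv in Hs. rewrite Rmult_assoc, Rinv_l in Hs by lra. lra. }
  destruct (Req_dec_T (IZR (up x)) (x + 1)) as [E|E].
  - exists (1 / INR K). split. { apply Rdiv_lt_0_compat; lra. }
    intros s Hs. specialize (Hd s 1 Rlt_0_1 Hs).
    set (xs := (s * INR K)%R) in *.
    apply Rabs_def2 in Hd. destruct Hd as [D1 D2].
    destruct (Rtotal_order xs x) as [L|[L|L]].
    + assert (U : (up x - 1)%Z = up xs).
      { apply tech_up; rewrite minus_IZR; lra. }
      rewrite <- U. destruct (Req_dec_T (IZR (up x - 1)) (xs + 1)) as [E2|E2].
      { rewrite minus_IZR in E2. lra. }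
      specialize (Hz (up x - 1)%Z) as [_ Hz2].
      replace (2 * (up x - 1) - 1)%Z with (2 * (up x - 1) - 1)%Z by ring. exact Hz2.
    + rewrite L. destruct (Req_dec_T (IZR (up x)) (x + 1)); [apply Hrefl | contradiction].
    + assert (U : (up x)%Z = up xs).
      { apply tech_up; lra. }
      rewrite <- U. destruct (Req_dec_T (IZR (up x)) (xs + 1)) as [E2|E2].
      { lra. }
      specialize (Hz (up x - 1)%Z) as [Hz1 _].
      replace (2 * up x - 1)%Z with (2 * (up x - 1) + 1)%Z by ring. exact Hz1.
  - assert (A3 : IZR (up x) < x + 1).
    { destruct (Rle_lt_or_eq_dec (IZR (up x)) (x + 1)) as [h|h]; [lra|exact h|contradiction]. }
    exists (Rmin (IZR (up x) - x) (x + 1 - IZR (up x)) / INR K). split.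
    { apply Rdiv_lt_0_compat; [apply Rmin_glb_lt; lra | lra]. }
    intros s Hs.
    assert (Hm : 0 < Rmin (IZR (up x) - x) (x + 1 - IZR (up x))) by (apply Rmin_glb_lt; lra).
    specialize (Hd s _ Hm Hs).
    set (xs := (s * INR K)%R) in *.
    apply Rabs_def2 in Hd. destruct Hd as [D1 D2].
    pose proof (Rmin_l (IZR (up x) - x) (x + 1 - IZR (up x))).
    pose proof (Rmin_r (IZR (up x) - x) (x + 1 - IZR (up x))).
    assert (U : (up x)%Z = up xs) by (apply tech_up; lra).
    rewrite <- U. destruct (Req_dec_T (IZR (up x)) (xs + 1)) as [E2|E2]; [lra|].
    apply Hrefl.
Qed.

Lemma predmod n ib : (ib < n)%nat ->
  ((ib + n - 1) mod n = if Nat.eqb ib 0 then n - 1 else ib - 1)%nat.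
Proof.
  intros H. destruct ib as [|k].
  - simpl. apply Nat.mod_small; lia.
  - cbn [Nat.eqb]. replace (S k + n - 1)%nat with (k + 1 * n)%nat by lia.
    rewrite Nat.Div0.mod_add. rewrite Nat.mod_small by lia. lia.
Qed.

Lemma le_char n ba ia bb ib Ha Hb :
  S1le n (exist _ (ba, ia) Ha) (exist _ (bb, ib) Hb) <->
  (ba = bb /\ ia = ib) \/
  (ba = false /\ bb = true /\ (ia = ib \/ (ib = 0 /\ ia = n - 1) \/ (1 <= ib /\ ia = ib - 1)))%nat.
Proof.
  unfold S1le; simpl. simpl in Hb. rewrite predmod by exact Hb.
  destruct (Nat.eqb_spec ib 0); destruct bb, ba; split; intros; intuition (try discriminate; try lia).
Qed.

Lemma pt_eq n (a b : S1pt n) : proj1_sig a = proj1_sig b -> a = b.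
Proof. destruct a, b; simpl; intros; subst; f_equal; apply proof_irrelevance. Qed.

Lemma le_refl n a : S1le n a a.
Proof. destruct a as [[b i] H]. apply le_char. auto. Qed.

Lemma le_trans n a b c : S1le n a b -> S1le n b c -> S1le n a c.
Proof.
  destruct a as [[ba ia] Ha], b as [[bb ib] Hb], c as [[bc ic] Hc].
  rewrite !le_char. intros H1 H2.
  destruct ba, bb, bc; intuition (try discriminate; try lia).
Qed.

Definition zpath n (v : nat -> S1pt n) (K : nat) (t : unitI) : S1pt n :=
  v (Z.to_nat (idxZ K (proj1_sig t))).

Lemma zpath_cont n v K : (0 < K)%nat ->
  (forall j, S1le n (v (2*j+1)%nat) (v (2*j)%nat) /\ S1le n (v (2*j+1)%nat) (v (2*j+2)%nat)) ->
  cont_path (S1open n) (zpath n v K).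
Proof.
  intros HK Hz U HU t Ht.
  destruct (zig_local (S1le n) (fun z => v (Z.to_nat z)) K HK (le_refl n)) with (t := proj1_sig t)
    as [eps [He Hs]].
  - intros z. destruct (Z_lt_le_dec z 0).
    + replace (Z.to_nat (2*z+1)) with 0%nat by lia.
      replace (Z.to_nat (2*z)) with 0%nat by lia.
      replace (Z.to_nat (2*z-1)) with 0%nat by lia. split; apply le_refl.
    + split.
      * replace (Z.to_nat (2*z+1)) with (2 * Z.to_nat z + 1)%nat by lia.
        replace (Z.to_nat (2*z)) with (2 * Z.to_nat z)%nat by lia. apply Hz.
      * destruct (Z.eq_dec z 0).
        { subst. simpl. apply le_refl. }
        replace (Z.to_nat (2*z-1)) with (2 * (Z.to_nat z - 1) + 1)%nat by lia.
        replace (Z.to_nat (2*z)) with (2 * (Z.to_nat z - 1) + 2)%nat by lia. apply Hz.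
  - exists eps. split; auto. intros s Hs'. apply (HU _ _ (Hs _ Hs')). exact Ht.
Qed.

Lemma idx0 K : idxZ K 0 = 0%Z.
Proof.
  unfold idxZ. rewrite Rmult_0_l.
  assert (U : up 0 = 1%Z) by (symmetry; apply tech_up; simpl; lra).
  rewrite U. destruct (Req_dec_T (IZR 1) (0 + 1)); [reflexivity | simpl in *; lra].
Qed.

Lemma idx1 K : idxZ K 1 = (2 * Z.of_nat K)%Z.
Proof.
  unfold idxZ. rewrite Rmult_1_l.
  assert (U : up (INR K) = (Z.of_nat K + 1)%Z) by
    (symmetry; apply tech_up; rewrite plus_IZR, <- INR_IZR_INZ; simpl; lra).
  rewrite U. destruct (Req_dec_T (IZR (Z.of_nat K + 1)) (INR K + 1)) as [e|e].
  - lia.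
  - exfalso; apply e. rewrite plus_IZR, <- INR_IZR_INZ. reflexivity.
Qed.

Lemma zpath_0 n v K : zpath n v K I0 = v 0%nat.
Proof. unfold zpath. simpl. rewrite idx0. reflexivity. Qed.

Lemma zpath_1 n v K : zpath n v K I1 = v (2 * K)%nat.
Proof. unfold zpath. simpl. rewrite idx1. f_equal. lia. Qed.

Definition downQ n (Q : S1pt n * S1pt n -> Prop) := forall p q, Q p ->
  S1le n (fst q) (fst p) -> S1le n (snd q) (snd p) -> Q q.

Lemma below_open n c : S1open n (fun a => S1le n a c).
Proof. intros a b H1 H2. eapply le_trans; eauto. Qed.

Lemma piece n (Q : S1pt n * S1pt n -> Prop) (sg : S1pt n * S1pt n -> unitI -> S1pt n)
  (HQ : downQ n Q)
  (Hc : forall p, Q p -> cont_path (S1open n) (sg p))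
  (Hm : forall p q, Q p -> S1le n (fst q) (fst p) -> S1le n (snd q) (snd p) ->
        forall t, S1le n (sg q t) (sg p t))
  (He : forall p, Q p -> sg p I0 = fst p /\ sg p I1 = snd p) :
  { s : {p | Q p} -> Path (S1pt n) (S1open n) |
    open_prod (S1open n) Q /\ cont_on (S1open n) Q s /\ is_section (S1open n) Q s }.
Proof.
  exists (fun q => exist _ (sg (proj1_sig q)) (Hc _ (proj2_sig q))).
  split; [|split].
  - intros p Hp. exists (fun a => S1le n a (fst p)), (fun b => S1le n b (snd p)).
    repeat split; try apply below_open; try apply le_refl.
    intros a b Ha Hb. apply (HQ p); auto.
  - intros O HO. exists (fun p => exists h : Q p, O (exist _ (sg p) (Hc p h))).
    split.
    + intros p [h Hp]. destruct (HO _ Hp) as [l [Hl1 [Hl2 Hl3]]].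
      exists (fun a => S1le n a (fst p)), (fun b => S1le n b (snd p)).
      repeat split; try apply below_open; try apply le_refl.
      intros a b Ha Hb. assert (h' : Q (a, b)) by (apply (HQ p); auto).
      exists h'. apply Hl3. intros KU HKU t HK. simpl.
      destruct (Hl1 _ HKU) as [_ Hop]. apply (Hop _ (sg p t)).
      * apply Hm; auto.
      * apply (Hl2 _ HKU t HK).
    + intros [p h]. simpl. split.
      * intros H. exists h. exact H.
      * intros [h' H]. replace h with h' by apply proof_irrelevance. exact H.
  - intros [p h]. simpl. apply He; auto.
Qed.

Definition mkd n (Hn : (0 < n)%nat) (b : bool) (i : nat) : S1pt n :=
  match lt_dec i n with
  | left H => exist _ (b, i) H
  | right _ => exist _ (false, 0%nat) Hn
  end.

Lemma mkd_val n Hn b i : (i < n)%nat -> proj1_sig (mkd n Hn b i) = (b, i).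
Proof. intros H. unfold mkd. destruct (lt_dec i n); [reflexivity | contradiction]. Qed.

Fixpoint ptc (r : nat) : bool * nat :=
  match r with
  | O => (false, O)
  | S r' => let (b, i) := ptc r' in if b then (false, i) else (true, S i)
  end.

Lemma ptc_S r b i : ptc r = (b, i) -> ptc (S r) = if b then (false, i) else (true, S i).
Proof. intros H. simpl. rewrite H. reflexivity. Qed.

Lemma ptc_eo k : ptc (2 * k) = (false, k) /\ ptc (2 * k + 1) = (true, k + 1)%nat.
Proof.
  induction k as [|k [IH1 IH2]].
  - split; reflexivity.
  - replace (2 * S k)%nat with (S (2 * k + 1)) by lia.
    replace (2 * S k + 1)%nat with (S (S (2 * k + 1))) by lia.
    pose proof (ptc_S _ _ _ IH2) as E1. cbv iota beta in E1.
    pose proof (ptc_S _ _ _ E1) as E2. cbv iota beta in E2.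
    split; [rewrite E1; f_equal; lia | ]. replace (S (2 * k + 1) + 1)%nat with (S (S (2 * k + 1))) by lia. rewrite E2; f_equal; lia.
Qed.

Definition pt n Hn (r : nat) : S1pt n := mkd n Hn (fst (ptc r)) (snd (ptc r)).

Definition inA n (a : S1pt n) : Prop := proj1_sig a <> (true, 0%nat).

Definition lpos n (a : S1pt n) : nat :=
  let (b, i) := proj1_sig a in if b then (2 * i - 1)%nat else (2 * i)%nat.

Definition rel (r s : nat) : Prop :=
  r = s \/ (exists k, s = 2 * k + 1 /\ (r = s + 1 \/ r + 1 = s))%nat.

Lemma pt_spec n Hn r : (r <= 2 * n - 2)%nat -> inA n (pt n Hn r) /\ lpos n (pt n Hn r) = r.
Proof.
  intros Hr. unfold inA, lpos, pt.
  destruct (Nat.Even_or_Odd r) as [[k Hk]|[k Hk]]; subst r.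
  - destruct (ptc_eo k) as [E _]. rewrite E. simpl. rewrite mkd_val by lia.
    split; [congruence | lia].
  - destruct (ptc_eo k) as [_ E]. rewrite E. simpl. rewrite mkd_val by lia.
    split; [intro H; inversion H; lia | lia].
Qed.

Lemma pos_bound n a : inA n a -> (lpos n a <= 2 * n - 2)%nat.
Proof.
  destruct a as [[b i] H]. unfold inA, lpos; simpl in *. destruct b; lia.
Qed.

Lemma inA_down n a b : S1le n a b -> inA n b -> inA n a.
Proof.
  destruct a as [[ba ia] Ha], b as [[bb ib] Hb]. rewrite le_char. unfold inA; simpl.
  intros H1 H2 E. inversion E; subst. apply H2.
  destruct H1 as [[E1 E2]|[E1 _]]; [subst; reflexivity | discriminate].
Qed.

Lemma line_le n a b : inA n a -> inA n b -> (S1le n a b <-> rel (lpos n a) (lpos n b)).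
Proof.
  destruct a as [[ba ia] Ha], b as [[bb ib] Hb]. rewrite le_char. unfold inA, lpos, rel; simpl.
  intros HA HB. simpl in Ha, Hb.
  destruct ba, bb.
  - assert (ia <> 0)%nat by (intro; subst; auto).
    assert (ib <> 0)%nat by (intro; subst; auto).
    split.
    + intros [[_ E]|[E _]]; [left; lia | discriminate].
    + intros [E|[k [E1 E2]]]; left; split; auto; lia.
  - assert (ia <> 0)%nat by (intro; subst; auto).
    split.
    + intros [[E _]|[E _]]; discriminate.
    + intros [E|[k [E1 E2]]]; lia.
  - assert (ib <> 0)%nat by (intro; subst; auto).
    split.
    + intros [[E _]|[_ [_ E]]]; [discriminate|].
      right. exists (ib - 1)%nat. split; [lia|]. lia.
    + intros [E|[k [E1 E2]]]; [lia|]. right; split; auto; split; auto. lia.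
  - split.
    + intros [[_ E]|[_ [E _]]]; [left; lia | discriminate].
    + intros [E|[k [E1 E2]]]; [left; split; auto; lia | lia].
Qed.

Lemma rel_min_step r c c' k : c = (2 * k + 1)%nat -> (c' = c + 1 \/ c' + 1 = c)%nat ->
  rel (Nat.min r c') (Nat.min r c).
Proof.
  intros Hc Hc'. unfold rel.
  destruct (le_lt_dec r c'), (le_lt_dec r c).
  - left; lia.
  - right. exists k. lia.
  - right. exists k. lia.
  - right. exists k. lia.
Qed.

Lemma rel_min_mono r s c : rel r s -> rel (Nat.min r c) (Nat.min s c).
Proof.
  unfold rel. intros [E|[k [E1 E2]]].
  - left; lia.
  - destruct (le_lt_dec s c), (le_lt_dec r c).
    + right; exists k; lia.
    + left; lia.
    + left; lia.
    + left; lia.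
Qed.

Definition v1 n Hn (a b : S1pt n) (i : nat) : S1pt n :=
  let K := (2 * n - 1)%nat in
  if (i <=? K)%nat then (if (lpos n a <=? K - i)%nat then a else pt n Hn (K - i))
  else (if (lpos n b <=? i - K)%nat then b else pt n Hn (i - K)).

Definition f1 n (a b : S1pt n) (i : nat) : nat :=
  let K := (2 * n - 1)%nat in
  if (i <=? K)%nat then Nat.min (lpos n a) (K - i) else Nat.min (lpos n b) (i - K).

Lemma v1_spec n Hn a b i : inA n a -> inA n b ->
  inA n (v1 n Hn a b i) /\ lpos n (v1 n Hn a b i) = f1 n a b i.
Proof.
  intros Ha Hb. pose proof (pos_bound n a Ha). pose proof (pos_bound n b Hb).
  unfold v1, f1. destruct (i <=? 2 * n - 1)%nat.
  - destruct (Nat.leb_spec (lpos n a) (2 * n - 1 - i)).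
    + split; auto. lia.
    + destruct (pt_spec n Hn (2 * n - 1 - i)) as [h1 h2]; [lia|]. split; auto. lia.
  - destruct (Nat.leb_spec (lpos n b) (i - (2 * n - 1))).
    + split; auto. lia.
    + destruct (pt_spec n Hn (i - (2 * n - 1))) as [h1 h2]; [lia|]. split; auto. lia.
Qed.

Lemma leb_t x y : (x <= y)%nat -> (x <=? y)%nat = true.
Proof. apply Nat.leb_le. Qed.
Lemma leb_f x y : (y < x)%nat -> (x <=? y)%nat = false.
Proof. apply Nat.leb_gt. Qed.

Lemma v1_zig n Hn a b : (2 < n)%nat -> inA n a -> inA n b -> forall j,
  S1le n (v1 n Hn a b (2*j+1)) (v1 n Hn a b (2*j)) /\
  S1le n (v1 n Hn a b (2*j+1)) (v1 n Hn a b (2*j+2)).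
Proof.
  intros hn Ha Hb j.
  destruct (v1_spec n Hn a b (2*j) Ha Hb) as [A0 P0].
  destruct (v1_spec n Hn a b (2*j+1) Ha Hb) as [A1 P1].
  destruct (v1_spec n Hn a b (2*j+2) Ha Hb) as [A2 P2].
  rewrite !line_le by auto. rewrite P0, P1, P2. unfold f1.
  destruct (le_lt_dec (j + 1) (n - 1)).
  - rewrite !leb_t by lia. split.
    + apply rel_min_step with (k := (n - 1 - j)%nat); lia.
    + apply rel_min_step with (k := (n - 2 - j)%nat); lia.
  - destruct (Nat.eq_dec j (n - 1)).
    + rewrite (leb_t (2 * j)), (leb_t (2 * j + 1)), (leb_f (2 * j + 2)) by lia. split.
      * apply rel_min_step with (k := 0%nat); lia.
      * unfold rel. destruct (Nat.eq_dec (lpos n b) 0); [left; lia|]. right. exists 0%nat. lia.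
    + rewrite (leb_f (2 * j)), (leb_f (2 * j + 1)), (leb_f (2 * j + 2)) by lia. split.
      * apply rel_min_step with (k := (j - n)%nat); lia.
      * apply rel_min_step with (k := (j - n + 1)%nat); lia.
Qed.

Lemma v1_mono n Hn a b a' b' i : inA n a -> inA n b -> S1le n a' a -> S1le n b' b ->
  S1le n (v1 n Hn a' b' i) (v1 n Hn a b i).
Proof.
  intros Ha Hb H1 H2.
  assert (Ha' : inA n a') by (eapply inA_down; eauto).
  assert (Hb' : inA n b') by (eapply inA_down; eauto).
  destruct (v1_spec n Hn a b i Ha Hb) as [A0 P0].
  destruct (v1_spec n Hn a' b' i Ha' Hb') as [A1 P1].
  rewrite line_le by auto. rewrite P0, P1. unfold f1.
  rewrite line_le in H1, H2 by auto.
  destruct (i <=? 2 * n - 1)%nat; apply rel_min_mono; auto.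
Qed.

Definition Q1 n (p : S1pt n * S1pt n) : Prop := inA n (fst p) /\ inA n (snd p).
Definition sg1 n Hn (p : S1pt n * S1pt n) : unitI -> S1pt n :=
  zpath n (v1 n Hn (fst p) (snd p)) (2 * n - 1).

Lemma sg1_props n Hn : (2 < n)%nat ->
  downQ n (Q1 n) /\
  (forall p, Q1 n p -> cont_path (S1open n) (sg1 n Hn p)) /\
  (forall p q, Q1 n p -> S1le n (fst q) (fst p) -> S1le n (snd q) (snd p) ->
        forall t, S1le n (sg1 n Hn q t) (sg1 n Hn p t)) /\
  (forall p, Q1 n p -> sg1 n Hn p I0 = fst p /\ sg1 n Hn p I1 = snd p).
Proof.
  intros hn. split; [|split; [|split]].
  - intros p q [h1 h2] e1 e2. split; eapply inA_down; eauto.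
  - intros p [h1 h2]. apply zpath_cont; [lia|]. intros j. apply v1_zig; auto.
  - intros p q [h1 h2] e1 e2 t. unfold sg1, zpath. apply v1_mono; auto.
  - intros [a b] [h1 h2]. simpl in *. unfold sg1. rewrite zpath_0, zpath_1. simpl.
    pose proof (pos_bound n a h1). pose proof (pos_bound n b h2).
    unfold v1. split.
    + rewrite leb_t by lia. rewrite leb_t by lia. reflexivity.
    + rewrite leb_f by lia. rewrite leb_t by lia. reflexivity.
Qed.

Definition C n (x y : bool * nat) : Prop :=
  let (ba, ia) := x in let (bb, ib) := y in
  (ba = bb /\ ia = ib) \/
  (ba = false /\ bb = true /\ (ia = ib \/ (ib = 0 /\ ia = n - 1) \/ (1 <= ib /\ ia = ib - 1)))%nat.

Lemma le_char2 n a b : S1le n a b <-> C n (proj1_sig a) (proj1_sig b).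
Proof. destruct a as [[ba ia] Ha], b as [[bb ib] Hb]. apply le_char. Qed.

Definition rho n Hn (a : S1pt n) : S1pt n :=
  let (b, i) := proj1_sig a in mkd n Hn b (if (i + 1 =? n)%nat then 0%nat else (i + 1)%nat).
Definition rho' n Hn (a : S1pt n) : S1pt n :=
  let (b, i) := proj1_sig a in mkd n Hn b (if (i =? 0)%nat then (n - 1)%nat else (i - 1)%nat).

Lemma rho_val n Hn a : proj1_sig (rho n Hn a) =
  (fst (proj1_sig a), if (snd (proj1_sig a) + 1 =? n)%nat then 0%nat else (snd (proj1_sig a) + 1)%nat).
Proof.
  destruct a as [[b i] H]. unfold rho. simpl in *. apply mkd_val.
  destruct (Nat.eqb_spec (i + 1) n); lia.
Qed.

Lemma rho'_val n Hn a : proj1_sig (rho' n Hn a) =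
  (fst (proj1_sig a), if (snd (proj1_sig a) =? 0)%nat then (n - 1)%nat else (snd (proj1_sig a) - 1)%nat).
Proof.
  destruct a as [[b i] H]. unfold rho'. simpl in *. apply mkd_val.
  destruct (Nat.eqb_spec i 0); lia.
Qed.

Lemma rho_rho' n Hn a : rho n Hn (rho' n Hn a) = a.
Proof.
  apply pt_eq. rewrite rho_val, rho'_val. destruct a as [[b i] H]. simpl in *.
  f_equal. destruct (Nat.eqb_spec i 0).
  - destruct (Nat.eqb_spec (n - 1 + 1) n); lia.
  - destruct (Nat.eqb_spec (i - 1 + 1) n); lia.
Qed.

Lemma rho_mono n Hn a b : S1le n a b -> S1le n (rho n Hn a) (rho n Hn b).
Proof.
  rewrite !le_char2, !rho_val. destruct a as [[ba ia] Ha], b as [[bb ib] Hb]. simpl in *.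
  destruct (Nat.eqb_spec (ia + 1) n), (Nat.eqb_spec (ib + 1) n);
  destruct ba, bb; intuition (try discriminate; try lia).
Qed.

Lemma rho'_mono n Hn a b : S1le n a b -> S1le n (rho' n Hn a) (rho' n Hn b).
Proof.
  rewrite !le_char2, !rho'_val. destruct a as [[ba ia] Ha], b as [[bb ib] Hb]. simpl in *.
  destruct (Nat.eqb_spec ia 0), (Nat.eqb_spec ib 0);
  destruct ba, bb; intuition (try discriminate; try lia).
Qed.

Lemma rho'_inA n Hn a : (2 < n)%nat -> proj1_sig a <> (true, 1%nat) -> inA n (rho' n Hn a).
Proof.
  intros hn H. unfold inA. rewrite rho'_val. destruct a as [[b i] Ha]. simpl in *.
  intros E. inversion E. subst. apply H. f_equal.
  destruct (Nat.eqb_spec i 0); lia.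
Qed.

Definition Q2 n Hn (p : S1pt n * S1pt n) : Prop :=
  Q1 n (rho' n Hn (fst p), rho' n Hn (snd p)).
Definition sg2 n Hn (p : S1pt n * S1pt n) (t : unitI) : S1pt n :=
  rho n Hn (sg1 n Hn (rho' n Hn (fst p), rho' n Hn (snd p)) t).

Lemma sg2_props n Hn : (2 < n)%nat ->
  downQ n (Q2 n Hn) /\
  (forall p, Q2 n Hn p -> cont_path (S1open n) (sg2 n Hn p)) /\
  (forall p q, Q2 n Hn p -> S1le n (fst q) (fst p) -> S1le n (snd q) (snd p) ->
        forall t, S1le n (sg2 n Hn q t) (sg2 n Hn p t)) /\
  (forall p, Q2 n Hn p -> sg2 n Hn p I0 = fst p /\ sg2 n Hn p I1 = snd p).
Proof.
  intros hn. destruct (sg1_props n Hn hn) as [D [Co [M E]]].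
  split; [|split; [|split]].
  - intros p q h e1 e2. unfold Q2 in *. apply (D _ _ h); simpl; apply rho'_mono; auto.
  - intros p h U HU. unfold sg2.
    apply (Co _ h (fun a => U (rho n Hn a))).
    intros a b hab hb. apply (HU _ _ (rho_mono n Hn _ _ hab) hb).
  - intros p q h e1 e2 t. unfold sg2. apply rho_mono. apply M; auto; simpl; apply rho'_mono; auto.
  - intros p h. unfold sg2. destruct (E _ h) as [E1 E2]. rewrite E1, E2. simpl.
    rewrite !rho_rho'. auto.
Qed.

Definition isx0 n (a : S1pt n) : bool :=
  match proj1_sig a with (false, O) => true | _ => false end.

Definition x0 n Hn := mkd n Hn false 0.
Definition y0 n Hn := mkd n Hn true 0.
Definition y1 n Hn := mkd n Hn true 1.

Lemma isx0_eq n Hn a : isx0 n a = true -> a = x0 n Hn.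
Proof.
  intros H. apply pt_eq. unfold x0. rewrite mkd_val by auto.
  unfold isx0 in H. destruct (proj1_sig a) as [[|] [|i]]; try discriminate; reflexivity.
Qed.

Lemma isx0_down n a a' : S1le n a' a -> isx0 n a = true -> isx0 n a' = true.
Proof.
  rewrite le_char2. unfold isx0. destruct (proj1_sig a) as [[|] [|i]], (proj1_sig a') as [[|] [|j]];
  simpl; intuition (try discriminate; try lia).
Qed.

Lemma x0_le n Hn a : isx0 n a = true -> S1le n (x0 n Hn) a.
Proof. intros H. rewrite (isx0_eq n Hn a H). apply le_refl. Qed.

Lemma x0_y0 n Hn : (2 < n)%nat -> S1le n (x0 n Hn) (y0 n Hn) /\ S1le n (x0 n Hn) (y1 n Hn).
Proof.
  intros hn. unfold x0, y0, y1. rewrite !le_char2, !mkd_val by lia. simpl. split; right; intuition lia.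
Qed.

Lemma both_x0 n Hn a : (2 < n)%nat -> S1le n a (y0 n Hn) -> S1le n a (y1 n Hn) -> isx0 n a = true.
Proof.
  intros hn. unfold y0, y1. rewrite !le_char2, !mkd_val by lia. unfold isx0.
  destruct (proj1_sig a) as [[|] [|i]]; simpl; intuition (try discriminate; try lia).
Qed.

Definition fx n (a c : S1pt n) : S1pt n := if isx0 n a then a else c.

Definition path3 n Hn (a b c d : S1pt n) (i : nat) : S1pt n :=
  match i with
  | 0 | 1 => a
  | 2 => fx n a c
  | 3 => x0 n Hn
  | 4 => fx n b d
  | _ => b
  end.

Lemma fx_ge n a c : S1le n a c -> S1le n a (fx n a c).
Proof. intros H. unfold fx. destruct (isx0 n a); auto. apply le_refl. Qed.

Lemma fx_x0 n Hn a c : S1le n (x0 n Hn) c -> S1le n (x0 n Hn) (fx n a c).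
Proof. intros H. unfold fx. destruct (isx0 n a) eqn:E; auto. apply x0_le; auto. Qed.

Lemma fx_mono n a a' c : S1le n a' a -> S1le n a c -> S1le n (fx n a' c) (fx n a c).
Proof.
  intros H1 H2. unfold fx. destruct (isx0 n a) eqn:E.
  - rewrite (isx0_down n a a' H1 E). auto.
  - destruct (isx0 n a'); [eapply le_trans; eauto | apply le_refl].
Qed.

Lemma path3_big n Hn a b c d i : (5 <= i)%nat -> path3 n Hn a b c d i = b.
Proof. intros H. destruct i as [|[|[|[|[|i]]]]]; try lia; reflexivity. Qed.

Lemma path3_zig n Hn a b c d : S1le n a c -> S1le n b d -> S1le n (x0 n Hn) c -> S1le n (x0 n Hn) d ->
  forall j, S1le n (path3 n Hn a b c d (2*j+1)) (path3 n Hn a b c d (2*j)) /\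
            S1le n (path3 n Hn a b c d (2*j+1)) (path3 n Hn a b c d (2*j+2)).
Proof.
  intros h1 h2 h3 h4 j.
  destruct j as [|[|j]].
  - simpl. split; [apply le_refl | apply fx_ge; auto].
  - simpl. split; apply fx_x0; auto.
  - destruct j as [|j].
    + simpl. split; [apply fx_ge; auto | apply le_refl].
    + rewrite !path3_big by lia. split; apply le_refl.
Qed.

Lemma path3_mono n Hn a b a' b' c d : S1le n a' a -> S1le n b' b -> S1le n a c -> S1le n b d ->
  forall i, S1le n (path3 n Hn a' b' c d i) (path3 n Hn a b c d i).
Proof.
  intros h1 h2 h3 h4 i. destruct i as [|[|[|[|[|i]]]]]; simpl; auto; try apply le_refl;
  apply fx_mono; auto.
Qed.

Lemma path3_x0 n Hn a b c d : S1le n (x0 n Hn) a -> S1le n (x0 n Hn) b -> S1le n a c -> S1le n b d ->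
  forall i, S1le n (x0 n Hn) (path3 n Hn a b c d i).
Proof.
  intros h1 h2 h3 h4 i. destruct i as [|[|[|[|[|i]]]]]; simpl; auto; try apply le_refl.
  - eapply le_trans; [exact h1|]. apply fx_ge; auto.
  - eapply le_trans; [exact h2|]. apply fx_ge; auto.
Qed.

Lemma path3_xx n Hn c d i : path3 n Hn (x0 n Hn) (x0 n Hn) c d i = x0 n Hn.
Proof.
  assert (E : isx0 n (x0 n Hn) = true).
  { unfold isx0, x0. unfold mkd. destruct (lt_dec 0 n); reflexivity. }
  destruct i as [|[|[|[|[|i]]]]]; simpl; unfold fx; rewrite ?E; reflexivity.
Qed.

Definition P1 n Hn (p : S1pt n * S1pt n) : Prop := S1le n (fst p) (y0 n Hn) /\ S1le n (snd p) (y1 n Hn).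
Definition P2 n Hn (p : S1pt n * S1pt n) : Prop := S1le n (fst p) (y1 n Hn) /\ S1le n (snd p) (y0 n Hn).
Definition Q3 n Hn p := P1 n Hn p \/ P2 n Hn p.

Definition v3 n Hn (p : S1pt n * S1pt n) : nat -> S1pt n :=
  if excluded_middle_informative (P1 n Hn p)
  then path3 n Hn (fst p) (snd p) (y0 n Hn) (y1 n Hn)
  else path3 n Hn (fst p) (snd p) (y1 n Hn) (y0 n Hn).

Definition sg3 n Hn p := zpath n (v3 n Hn p) 3.

Lemma sg3_props n Hn : (2 < n)%nat ->
  downQ n (Q3 n Hn) /\
  (forall p, Q3 n Hn p -> cont_path (S1open n) (sg3 n Hn p)) /\
  (forall p q, Q3 n Hn p -> S1le n (fst q) (fst p) -> S1le n (snd q) (snd p) ->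
        forall t, S1le n (sg3 n Hn q t) (sg3 n Hn p t)) /\
  (forall p, Q3 n Hn p -> sg3 n Hn p I0 = fst p /\ sg3 n Hn p I1 = snd p).
Proof.
  intros hn. destruct (x0_y0 n Hn hn) as [X0 X1].
  split; [|split; [|split]].
  - intros p q [[h1 h2]|[h1 h2]] e1 e2; [left|right]; split; eapply le_trans; eauto.
  - intros p h. unfold sg3. apply zpath_cont; [lia|]. unfold v3.
    destruct (excluded_middle_informative (P1 n Hn p)) as [[h1 h2]|hn1].
    + apply path3_zig; auto.
    + destruct h as [h|[h1 h2]]; [contradiction|]. apply path3_zig; auto.
  - intros p q h e1 e2 t. unfold sg3, zpath. generalize (Z.to_nat (idxZ 3 (proj1_sig t))). intros i.
    unfold v3.
    destruct (excluded_middle_informative (P1 n Hn p)) as [[h1 h2]|hn1].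
    + destruct (excluded_middle_informative (P1 n Hn q)) as [_|hq].
      * apply path3_mono; auto.
      * exfalso. apply hq. split; eapply le_trans; eauto.
    + destruct h as [h|[h1 h2]]; [contradiction|].
      destruct (excluded_middle_informative (P1 n Hn q)) as [[g1 g2]|hq].
      * assert (ea : isx0 n (fst q) = true) by (apply (both_x0 n Hn); [exact hn | exact g1 | eapply le_trans; [exact e1 | exact h1]]).
        assert (eb : isx0 n (snd q) = true) by (apply (both_x0 n Hn); [exact hn | eapply le_trans; [exact e2 | exact h2] | exact g2]).
        rewrite (isx0_eq n Hn _ ea), (isx0_eq n Hn _ eb), path3_xx.
        apply path3_x0; auto.
        -- rewrite <- (isx0_eq n Hn _ ea). auto.
        -- rewrite <- (isx0_eq n Hn _ eb). auto.
      * apply path3_mono; auto.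
  - intros p h. unfold sg3. rewrite zpath_0, zpath_1. unfold v3.
    destruct (excluded_middle_informative (P1 n Hn p)); simpl; auto.
Qed.

Lemma cover3 n (hn : (2 < n)%nat) : mp_cover (S1pt n) (S1open n) 3.
Proof.
  assert (Hn : (0 < n)%nat) by lia.
  destruct (sg1_props n Hn hn) as [D1 [C1 [M1 E1]]].
  destruct (sg2_props n Hn hn) as [D2 [C2 [M2 E2]]].
  destruct (sg3_props n Hn hn) as [D3 [C3 [M3 E3]]].
  destruct (piece n _ _ D1 C1 M1 E1) as [s1 H1].
  destruct (piece n _ _ D2 C2 M2 E2) as [s2 H2].
  destruct (piece n _ _ D3 C3 M3 E3) as [s3 H3].
  set (Q := fun i : nat => match i with 0 => Q1 n | 1 => Q2 n Hn | _ => Q3 n Hn end).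
  exists Q.
  exists (fun i => match i as i0 return {p | Q i0 p} -> Path (S1pt n) (S1open n) with
                   | 0 => s1 | 1 => s2 | _ => s3 end).
  split.
  - intros i Hi. destruct i as [|[|[|i]]]; simpl; auto; lia.
  - intros [a b].
    destruct (classic (Q1 n (a, b))) as [h|h]; [exists 0%nat; split; [lia|exact h]|].
    destruct (classic (proj1_sig a <> (true, 1%nat) /\ proj1_sig b <> (true, 1%nat))) as [[g1 g2]|g].
    { exists 1%nat. split; [lia|]. simpl. split; apply rho'_inA; auto. }
    exists 2%nat. split; [lia|]. simpl. unfold Q1, inA in h. simpl in h.
    assert (Ey0 : forall c : S1pt n, proj1_sig c = (true, 0%nat) -> c = y0 n Hn).
    { intros c Hc. apply pt_eq. unfold y0. rewrite mkd_val by lia. auto. }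
    assert (Ey1 : forall c : S1pt n, proj1_sig c = (true, 1%nat) -> c = y1 n Hn).
    { intros c Hc. apply pt_eq. unfold y1. rewrite mkd_val by lia. auto. }
    destruct (classic (proj1_sig a = (true, 0%nat))) as [ea|ea].
    + assert (eb : proj1_sig b = (true, 1%nat)).
      { apply NNPP. intro nb. apply g. split; auto. rewrite ea. congruence. }
      left. unfold P1. simpl. rewrite (Ey0 a ea), (Ey1 b eb). split; apply le_refl.
    + assert (eb : proj1_sig b = (true, 0%nat)).
      { apply NNPP. intro nb. apply h. split; auto. }
      assert (ea' : proj1_sig a = (true, 1%nat)).
      { apply NNPP. intro na. apply g. split; auto. rewrite eb. congruence. }
      right. unfold P2. simpl. rewrite (Ey1 a ea'), (Ey0 b eb). split; apply le_refl.
Qed.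

Theorem theorem1 (n : nat) (hn : (2 < n)%nat) :
  exists m : nat, is_TC (S1pt n) (S1open n) m /\ (m <= 3)%nat.
Proof.
  pose proof (cover3 n hn) as H3.
  destruct (classic (mp_cover (S1pt n) (S1open n) 0)) as [h0|h0].
  { exists 0%nat. split; [split; [auto | intros; lia] | lia]. }
  destruct (classic (mp_cover (S1pt n) (S1open n) 1)) as [h1|h1].
  { exists 1%nat. split; [split; [auto|] | lia].
    intros m' hm. destruct m'; [contradiction | lia]. }
  destruct (classic (mp_cover (S1pt n) (S1open n) 2)) as [h2|h2].
  { exists 2%nat. split; [split; [auto|] | lia].
    intros m' hm. destruct m' as [|[|m']]; [contradiction | contradiction | lia]. }
  exists 3%nat. split; [split; [auto|] | lia].
  intros m' hm. destruct m' as [|[|[|m']]]; [contradiction | contradiction | contradiction | lia].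
Qed.
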